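(* Let $n\ge2$ and let $0\le x_1(0)\le\cdots\le x_n(0)\le1$ evolve under the static coverage control law. Then each $x_i(t)$ converges as $t\to\infty$ to a limit $\bar x_i$, and the limiting positions achieve optimal coverage: $\Phi(\bar x_1,\dots,\bar x_n,\rho)=\Phi^*$. Moreover, there is an absolute constant $C>0$ (independent of $n,\rho$, the initial positions and $\epsilon$) such that for every $\epsilon\in(0,1]$ and every $t\ge C\,n^2\log\!\big(\frac{n}{\epsilon}\frac{\rho_{\max}}{\rho_{\min}}\big)$, we have $|x_i(t)-\bar x_i|\le\epsilon$ for all $i$.
   Context: Let $\rho:[0,1]\to(0,\infty)$ be piecewise continuous with $\rho_{\min}\le\rho(z)\le\rho_{\max}$ for positive constants $\rho_{\min},\rho_{\max}$. For $a,b\in[0,1]$ let $d_\rho(a,b)=\int_{\min(a,b)}^{\max(a,b)}\rho(z)\,dz$, and $F(x)=\int_0^x\rho(z)\,dz$. The coverage of $x_1,\dots,x_n\in[0,1]$ is $\Phi(x_1,\dots,x_n,\rho)=\max_{y\in[0,1]}\min_i d_\rho(y,x_i)$ and $\Phi^*=\inf_{(x_1,\dots,x_n)\in[0,1]^n}\Phi(x_1,\dots,x_n,\rho)$. For $0\le a\le b\le1$ and $\alpha\ge0$, the $\alpha$-median $m^\alpha_\rho(a,b)$ is the unique $c\in[a,b]$ with $\int_a^c\rho(z)\,dz=\alpha\int_c^b\rho(z)\,dz$, equivalently $F(c)=\frac{F(a)+\alpha F(b)}{1+\alpha}$. The static coverage control law for $n\ge2$ agents is the iteration $x_1(t+1)=m^{1/2}_\rho(0,x_2(t))$,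 $x_i(t+1)=m^{1}_\rho(x_{i-1}(t),x_{i+1}(t))$ for $2\le i\le n-1$, $x_n(t+1)=m^{2}_\rho(x_{n-1}(t),1)$. *)

(* Defs.v *)
From Stdlib Require Import Reals Lra Lia List Classical ClassicalEpsilon.
Open Scope R_scope.

(* Riemann integral of f over [a,b] as a plain real number (well defined by
   proof irrelevance of RiemannInt; arbitrary if f is not integrable). *)
Definition Int (f : R -> R) (a b : R) : R :=
  epsilon (inhabits 0)
    (fun v => exists pr : Riemann_integrable f a b, RiemannInt pr = v).

Definition d_rho (rho : R -> R) (a b : R) : R := Int rho (Rmin a b) (Rmax a b).

Definition Fcum (rho : R -> R) (x : R) : R := Int rho 0 x.

Definition piecewise_continuous01 (rho : R -> R) : Prop :=
  exists l : list R,
    (forall x, 0 <= x <= 1 -> ~ In x l ->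
       limit1_in rho (fun y => 0 <= y <= 1) (rho x) x) /\
    (forall p, In p l -> 0 <= p <= 1 ->
       (p < 1 -> exists L, limit1_in rho (fun y => p < y <= 1) L p) /\
       (0 < p -> exists L, limit1_in rho (fun y => 0 <= y < p) L p)).

Fixpoint min_1_to (n : nat) (f : nat -> R) : R :=
  match n with
  | O => 0
  | S O => f 1%nat
  | S m => Rmin (min_1_to m f) (f n)
  end.

(* Coverage Phi(x_1..x_n, rho) = max_{y in [0,1]} min_i d_rho(y, x_i),
   taken as the least upper bound of the values (which is attained). *)
Definition Phi (rho : R -> R) (n : nat) (x : nat -> R) : R :=
  epsilon (inhabits 0)
    (is_lub (fun v => exists y, 0 <= y <= 1 /\
                        v = min_1_to n (fun i => d_rho rho y (x i)))).

Definition Phistar (rho : R -> R) (n : nat) : R :=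
  epsilon (inhabits 0)
    (fun v =>
       (forall x : nat -> R, (forall i, (1 <= i <= n)%nat -> 0 <= x i <= 1) ->
          v <= Phi rho n x) /\
       (forall w, (forall x : nat -> R,
                     (forall i, (1 <= i <= n)%nat -> 0 <= x i <= 1) ->
                     w <= Phi rho n x) -> w <= v)).

Definition amedian (rho : R -> R) (alpha a b : R) : R :=
  epsilon (inhabits 0)
    (fun c => a <= c <= b /\ d_rho rho a c = alpha * d_rho rho c b).

Definition coverage_law (rho : R -> R) (n : nat) (x : nat -> nat -> R) : Prop :=
  forall t : nat,
    x (S t) 1%nat = amedian rho (1/2) 0 (x t 2%nat) /\
    (forall i, (2 <= i <= n - 1)%nat ->
       x (S t) i = amedian rho 1 (x t (i - 1)%nat) (x t (i + 1)%nat)) /\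
    x (S t) n = amedian rho 2 (x t (n - 1)%nat) 1.

(* Main.v *)
Require Import Defs.
From Stdlib Require Import Reals Lra Lia List Classical ClassicalEpsilon RList RiemannInt_SF RiemannInt.
Open Scope R_scope.

Lemma endpoint_mod (f g : R -> R) (a b : R) :
  a <= b -> (forall x, a < x < b -> f x = g x) ->
  Riemann_integrable g a b -> Riemann_integrable f a b.
Proof.
  intros Hab Hfg Hg eps.
  destruct (Hg eps) as [phi [psi [H1 H2]]].
  exists phi.
  destruct psi as [psif [l [l0 Had]]].
  set (psi' := fun x => if Req_EM_T x a then Rabs (f a - phi a)
                        else if Req_EM_T x b then Rabs (f b - phi b) else psif x).
  assert (Had' : adapted_couple psi' a b l l0).
  { destruct Had as (Ho & H0 & Hl & Hlen & Hc).
    repeat split; auto.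
    intros i Hi. unfold constant_D_eq, open_interval in *.
    intros t Ht. rewrite <- (Hc i Hi t Ht).
    assert (A1 : pos_Rl l 0 <= pos_Rl l i).
    { apply (proj1 (RList_P6 l) Ho); lia. }
    assert (A2 : pos_Rl l (S i) <= pos_Rl l (pred (length l))).
    { apply (proj1 (RList_P6 l) Ho); lia. }
    rewrite H0 in A1; rewrite Hl in A2.
    rewrite Rmin_left in A1 by lra. rewrite Rmax_right in A2 by lra.
    unfold psi'. destruct (Req_EM_T t a); [lra|]. destruct (Req_EM_T t b); [lra|]. reflexivity. }
  exists (mkStepFun (existT _ l (existT _ l0 Had'))).
  split.
  - intros t Ht. simpl. unfold psi'.
    rewrite Rmin_left in Ht by lra. rewrite Rmax_right in Ht by lra.
    destruct (Req_EM_T t a). { subst; lra. }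
    destruct (Req_EM_T t b). { subst; lra. }
    rewrite Hfg by lra. apply H1. rewrite Rmin_left by lra. rewrite Rmax_right by lra. lra.
  - exact H2.
Qed.

Definition RLim (f : R -> R) (a L : R) : Prop :=
  forall eps, 0 < eps -> exists d, 0 < d /\ forall y, a < y < a + d -> Rabs (f y - L) < eps.
Definition LLim (f : R -> R) (b L : R) : Prop :=
  forall eps, 0 < eps -> exists d, 0 < d /\ forall y, b - d < y < b -> Rabs (f y - L) < eps.
Definition CPt (f : R -> R) (x : R) : Prop :=
  forall eps, 0 < eps -> exists d, 0 < d /\ forall y, Rabs (y - x) < d -> Rabs (f y - f x) < eps.

Lemma cont_of_CPt f x : CPt f x -> continuity_pt f x.
Proof.
  intros H. unfold continuity_pt, continue_in, limit1_in, limit_in. simpl. unfold R_dist.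
  intros eps Heps. destruct (H eps Heps) as [d [Hd Hy]]. exists d. split; auto.
  intros y [_ Hy']. apply Hy; auto.
Qed.

Lemma glue_integrable (f : R -> R) (a b La Lb : R) :
  a < b -> RLim f a La -> LLim f b Lb -> (forall x, a < x < b -> CPt f x) ->
  Riemann_integrable f a b.
Proof.
  intros Hab HA HB HC.
  set (g := fun x => if Rle_dec x a then La else if Rle_dec b x then Lb else f x).
  apply (endpoint_mod f g). lra.
  { intros x Hx. unfold g. destruct (Rle_dec x a); [lra|]. destruct (Rle_dec b x); [lra|]. auto. }
  apply continuity_implies_RiemannInt. lra.
  intros x Hx. apply cont_of_CPt.
  intros eps Heps.
  destruct (Req_dec x a) as [Ea|Na].
  - subst x. destruct (HA eps Heps) as [d [Hd Hy]].
    exists (Rmin d (b - a)). split. apply Rmin_pos; lra.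
    intros y Hy'. assert (Hm1 := Rmin_l d (b-a)). assert (Hm2 := Rmin_r d (b-a)).
    apply Rabs_def2 in Hy'.
    unfold g. destruct (Rle_dec a a); [|lra].
    destruct (Rle_dec y a). { rewrite Rminus_eq_0, Rabs_R0; lra. }
    destruct (Rle_dec b y); [lra|]. apply Hy; lra.
  - destruct (Req_dec x b) as [Eb|Nb].
    + subst x. destruct (HB eps Heps) as [d [Hd Hy]].
      exists (Rmin d (b - a)). split. apply Rmin_pos; lra.
      intros y Hy'. assert (Hm1 := Rmin_l d (b-a)). assert (Hm2 := Rmin_r d (b-a)).
      apply Rabs_def2 in Hy'.
      unfold g. destruct (Rle_dec b a); [lra|]. destruct (Rle_dec b b); [|lra].
      destruct (Rle_dec y a); [lra|].
      destruct (Rle_dec b y). { rewrite Rminus_eq_0, Rabs_R0; lra. }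
      apply Hy; lra.
    + destruct (HC x ltac:(lra) eps Heps) as [d [Hd Hy]].
      exists (Rmin d (Rmin (x - a) (b - x))). split. repeat apply Rmin_pos; lra.
      intros y Hy'. assert (Hm1 := Rmin_l d (Rmin (x - a) (b - x))).
      assert (Hm2 := Rmin_r d (Rmin (x - a) (b - x))).
      assert (Hm3 := Rmin_l (x - a) (b - x)). assert (Hm4 := Rmin_r (x - a) (b - x)).
      assert (Hy2 := Rabs_def2 _ _ Hy').
      unfold g. destruct (Rle_dec x a); [lra|]. destruct (Rle_dec b x); [lra|].
      destruct (Rle_dec y a); [lra|]. destruct (Rle_dec b y); [lra|]. apply Hy. lra.
Qed.

Lemma pieces (f : R -> R) : forall N (l : list R) a b, (length l <= N)%nat -> a < b ->
  (forall x, a < x < b -> ~ In x l -> CPt f x) ->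
  (exists L, RLim f a L) -> (exists L, LLim f b L) ->
  (forall p, In p l -> a < p < b -> (exists L, RLim f p L) /\ (exists L, LLim f p L)) ->
  inhabited (Riemann_integrable f a b).
Proof.
  induction N as [|N IH]; intros l a b Hlen Hab HC [La HA] [Lb HB] HP.
  - destruct l; [|simpl in Hlen; lia].
    constructor. apply (glue_integrable f a b La Lb); auto.
  - destruct (classic (exists p, In p l /\ a < p < b)) as [[p [Hp Hpab]]|Hno].
    + set (l' := remove Req_EM_T p l).
      assert (Hl' : (length l' <= N)%nat) by (pose proof (remove_length_lt Req_EM_T l p Hp); unfold l'; lia).
      destruct (HP p Hp Hpab) as [HR HL].
      assert (HP' : forall q, In q l' -> (exists L, RLim f q L) /\ (exists L, LLim f q L) \/ ~ (a < q < b)).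
      { intros q Hq. apply in_remove in Hq. destruct (classic (a < q < b)); [left; apply HP; tauto| right; auto]. }
      destruct (IH l' a p Hl' ltac:(lra)) as [I1].
      { intros x Hx Hn. apply HC. lra. intros Hin. apply Hn. apply in_in_remove; auto; lra. }
      { exists La; auto. } { auto. }
      { intros q Hq Hqa. destruct (HP' q Hq) as [H|H]; auto. lra. }
      destruct (IH l' p b Hl' ltac:(lra)) as [I2].
      { intros x Hx Hn. apply HC. lra. intros Hin. apply Hn. apply in_in_remove; auto; lra. }
      { auto. } { exists Lb; auto. }
      { intros q Hq Hqa. destruct (HP' q Hq) as [H|H]; auto. lra. }
      constructor. exact (RiemannInt_P24 I1 I2).
    + constructor. apply (glue_integrable f a b La Lb); auto.
      intros x Hx. apply HC; auto. intros Hin. apply Hno. eauto.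
Qed.

Lemma lim_unf f D L x : limit1_in f D L x ->
  forall eps, 0 < eps -> exists d, 0 < d /\ forall y, D y -> Rabs (y - x) < d -> Rabs (f y - L) < eps.
Proof.
  unfold limit1_in, limit_in; simpl; unfold R_dist. intros H eps He.
  destruct (H eps He) as [d [Hd Hy]]. exists d; split; auto.
Qed.

Lemma RLim_of f p L : p < 1 -> limit1_in f (fun y => p < y <= 1) L p -> RLim f p L.
Proof.
  intros Hp H eps He. destruct (lim_unf _ _ _ _ H eps He) as [d [Hd Hy]].
  exists (Rmin d (1 - p)). split. apply Rmin_pos; lra.
  intros y Hy'. assert (Hm1 := Rmin_l d (1-p)). assert (Hm2 := Rmin_r d (1-p)).
  apply Hy. lra. rewrite Rabs_right; lra.
Qed.

Lemma LLim_of f p L : 0 < p -> limit1_in f (fun y => 0 <= y < p) L p -> LLim f p L.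
Proof.
  intros Hp H eps He. destruct (lim_unf _ _ _ _ H eps He) as [d [Hd Hy]].
  exists (Rmin d p). split. apply Rmin_pos; lra.
  intros y Hy'. assert (Hm1 := Rmin_l d p). assert (Hm2 := Rmin_r d p).
  apply Hy. lra. rewrite Rabs_left; lra.
Qed.

Lemma rho_integrable01 rho : piecewise_continuous01 rho -> inhabited (Riemann_integrable rho 0 1).
Proof.
  intros [l [HC HP]].
  apply (pieces rho (length l) l 0 1); auto; try lra.
  - intros x Hx Hn eps He. destruct (lim_unf _ _ _ _ (HC x ltac:(lra) Hn) eps He) as [d [Hd Hy]].
    exists (Rmin d (Rmin x (1 - x))). split. repeat apply Rmin_pos; lra.
    intros y Hy'. assert (Hm1 := Rmin_l d (Rmin x (1-x))). assert (Hm2 := Rmin_r d (Rmin x (1-x))).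
    assert (Hm3 := Rmin_l x (1-x)). assert (Hm4 := Rmin_r x (1-x)).
    assert (Hy2 := Rabs_def2 _ _ Hy'). apply Hy. lra. lra.
  - destruct (classic (In 0 l)) as [Hin|Hn].
    + destruct (proj1 (HP 0 Hin ltac:(lra)) ltac:(lra)) as [L HL]. exists L. apply RLim_of; auto; lra.
    + exists (rho 0). intros eps He. destruct (lim_unf _ _ _ _ (HC 0 ltac:(lra) Hn) eps He) as [d [Hd Hy]].
      exists (Rmin d 1). split. apply Rmin_pos; lra.
      intros y Hy'. assert (Hm1 := Rmin_l d 1). assert (Hm2 := Rmin_r d 1).
      apply Hy. lra. rewrite Rabs_right; lra.
  - destruct (classic (In 1 l)) as [Hin|Hn].
    + destruct (proj2 (HP 1 Hin ltac:(lra)) ltac:(lra)) as [L HL]. exists L. apply LLim_of; auto; lra.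
    + exists (rho 1). intros eps He. destruct (lim_unf _ _ _ _ (HC 1 ltac:(lra) Hn) eps He) as [d [Hd Hy]].
      exists (Rmin d 1). split. apply Rmin_pos; lra.
      intros y Hy'. assert (Hm1 := Rmin_l d 1). assert (Hm2 := Rmin_r d 1).
      apply Hy. lra. rewrite Rabs_left; lra.
  - intros p Hp Hpab. destruct (HP p Hp ltac:(lra)) as [H1 H2].
    destruct (H1 ltac:(lra)) as [L1 HL1]. destruct (H2 ltac:(lra)) as [L2 HL2].
    split; [exists L1; apply RLim_of | exists L2; apply LLim_of]; auto; lra.
Qed.

Definition Good (rho : R -> R) (rmin rmax : R) : Prop :=
  inhabited (Riemann_integrable rho 0 1) /\ 0 < rmin /\
  forall z, 0 <= z <= 1 -> rmin <= rho z <= rmax.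

Lemma Int_spec rho rmin rmax a b : Good rho rmin rmax -> 0 <= a -> a <= b -> b <= 1 ->
  exists pr : Riemann_integrable rho a b, Int rho a b = RiemannInt pr.
Proof.
  intros [[I01] _] Ha Hab Hb.
  assert (I0b := RiemannInt_P22 I01 (conj (Rle_trans _ _ _ Ha Hab) Hb)).
  assert (Iab := RiemannInt_P23 I0b (conj Ha Hab)).
  exists Iab. unfold Int.
  assert (Hex : exists v, exists pr : Riemann_integrable rho a b, RiemannInt pr = v) by (exists (RiemannInt Iab); exists Iab; auto).
  destruct (epsilon_spec (inhabits 0) _ Hex) as [pr Hpr].
  rewrite <- Hpr. apply RiemannInt_P5.
Qed.

Lemma Int_chasles rho rmin rmax a b c : Good rho rmin rmax -> 0 <= a -> a <= b -> b <= c -> c <= 1 ->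
  Int rho a b + Int rho b c = Int rho a c.
Proof.
  intros G Ha Hab Hbc Hc.
  destruct (Int_spec rho rmin rmax a b G) as [p1 E1]; try lra.
  destruct (Int_spec rho rmin rmax b c G) as [p2 E2]; try lra.
  destruct (Int_spec rho rmin rmax a c G) as [p3 E3]; try lra.
  rewrite E1, E2, E3. apply RiemannInt_P26.
Qed.

Lemma Int_bounds rho rmin rmax a b : Good rho rmin rmax -> 0 <= a -> a <= b -> b <= 1 ->
  rmin * (b - a) <= Int rho a b <= rmax * (b - a).
Proof.
  intros G Ha Hab Hb.
  destruct (Int_spec rho rmin rmax a b G) as [p1 E1]; try lra.
  rewrite E1. apply RiemannInt_const_bound; auto.
  intros x Hx. apply (proj2 (proj2 G)). lra.
Qed.

Lemma Int_F rho rmin rmax a b : Good rho rmin rmax -> 0 <= a -> a <= b -> b <= 1 ->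
  Int rho a b = Fcum rho b - Fcum rho a.
Proof.
  intros G Ha Hab Hb. unfold Fcum.
  rewrite <- (Int_chasles rho rmin rmax 0 a b G); try lra.
Qed.

Lemma F0 rho rmin rmax : Good rho rmin rmax -> Fcum rho 0 = 0.
Proof.
  intros G. unfold Fcum. pose proof (Int_bounds rho rmin rmax 0 0 G). 
  assert (rmin * (0 - 0) <= Int rho 0 0 <= rmax * (0 - 0)) by (apply H; lra). nra.
Qed.

Lemma F_lower rho rmin rmax a b : Good rho rmin rmax -> 0 <= a -> a <= b -> b <= 1 ->
  rmin * (b - a) <= Fcum rho b - Fcum rho a <= rmax * (b - a).
Proof.
  intros G Ha Hab Hb. rewrite <- (Int_F rho rmin rmax a b G) by lra. apply (Int_bounds rho rmin rmax a b G); auto.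
Qed.

Lemma F_mono rho rmin rmax a b : Good rho rmin rmax -> 0 <= a <= 1 -> 0 <= b <= 1 ->
  Fcum rho a <= Fcum rho b -> a <= b.
Proof.
  intros G Ha Hb H. destruct (Rle_lt_dec a b); auto.
  pose proof (F_lower rho rmin rmax b a G ltac:(lra) ltac:(lra) ltac:(lra)). destruct G as [_ [Hm _]].
  assert (0 < rmin * (a - b)) by (apply Rmult_lt_0_compat; lra). lra.
Qed.

Lemma F_le rho rmin rmax a b : Good rho rmin rmax -> 0 <= a -> a <= b -> b <= 1 ->
  Fcum rho a <= Fcum rho b.
Proof.
  intros G Ha Hab Hb. pose proof (F_lower rho rmin rmax a b G Ha Hab Hb). destruct G as [_ [Hm _]].
  assert (0 <= rmin * (b - a)) by (apply Rmult_le_pos; lra). lra.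
Qed.

Lemma F_dist rho rmin rmax a b : Good rho rmin rmax -> 0 <= a <= 1 -> 0 <= b <= 1 ->
  rmin * Rabs (a - b) <= Rabs (Fcum rho a - Fcum rho b) <= rmax * Rabs (a - b).
Proof.
  intros G Ha Hb. assert (Hm : 0 < rmin) by apply G. destruct (Rle_lt_dec a b).
  - pose proof (F_lower rho rmin rmax a b G ltac:(lra) r ltac:(lra)).
    assert (0 <= rmin * (b - a)) by (apply Rmult_le_pos; lra).
    rewrite (Rabs_left1 (a - b)) by lra. rewrite Rabs_left1 by lra. lra.
  - pose proof (F_lower rho rmin rmax b a G ltac:(lra) ltac:(lra) ltac:(lra)).
    assert (0 <= rmin * (a - b)) by (apply Rmult_le_pos; lra).
    rewrite (Rabs_right (a - b)) by lra. rewrite Rabs_right by lra. lra.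
Qed.

Lemma d_rho_F rho rmin rmax y x : Good rho rmin rmax -> 0 <= y <= 1 -> 0 <= x <= 1 ->
  d_rho rho y x = Rabs (Fcum rho y - Fcum rho x).
Proof.
  intros G Hy Hx. unfold d_rho. destruct (Rle_lt_dec y x).
  - rewrite Rmin_left, Rmax_right by lra. rewrite (Int_F rho rmin rmax) by (auto; lra).
    pose proof (F_le rho rmin rmax y x G ltac:(lra) r ltac:(lra)). rewrite Rabs_left1; lra.
  - rewrite Rmin_right, Rmax_left by lra. rewrite (Int_F rho rmin rmax) by (auto; lra).
    pose proof (F_le rho rmin rmax x y G ltac:(lra) ltac:(lra) ltac:(lra)). rewrite Rabs_right; lra.
Qed.

Lemma F_ivt rho rmin rmax a b v : Good rho rmin rmax -> 0 <= a -> a <= b -> b <= 1 ->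
  Fcum rho a <= v <= Fcum rho b -> exists c, a <= c <= b /\ Fcum rho c = v.
Proof.
  intros G Ha Hab Hb Hv.
  set (cl := fun x => Rmax 0 (Rmin x 1)).
  assert (Hcl : forall x, 0 <= cl x <= 1).
  { intros x; unfold cl. split. apply Rmax_l. apply Rmax_lub; [lra| apply Rmin_r]. }
  assert (Hcl2 : forall x y, Rabs (cl x - cl y) <= Rabs (x - y)).
  { intros x y; unfold cl, Rmax, Rmin.
    destruct (Rle_dec x 1), (Rle_dec y 1), (Rle_dec 0 x), (Rle_dec 0 y), (Rle_dec 0 1);
    repeat (match goal with |- context [Rle_dec ?u ?w] => destruct (Rle_dec u w) end);
    unfold Rabs; repeat (destruct Rcase_abs); lra. }
  set (h := fun x => Fcum rho (cl x) - v).
  assert (Hrm : 0 < rmax).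
  { destruct G as [_ [Hm Hz]]. pose proof (Hz 0 ltac:(lra)). lra. }
  assert (Hc : continuity h).
  { intros x. unfold continuity_pt, continue_in, limit1_in, limit_in. simpl. unfold R_dist.
    intros eps He. exists (eps / rmax). split. apply Rdiv_lt_0_compat; lra.
    intros y [_ Hy]. unfold h.
    pose proof (F_dist rho rmin rmax (cl y) (cl x) G (Hcl y) (Hcl x)).
    pose proof (Hcl2 y x).
    replace (Fcum rho (cl y) - v - (Fcum rho (cl x) - v)) with (Fcum rho (cl y) - Fcum rho (cl x)) by ring.
    apply Rle_lt_trans with (rmax * Rabs (y - x)). 
    { apply Rle_trans with (rmax * Rabs (cl y - cl x)). lra. apply Rmult_le_compat_l; lra. }
    apply Rmult_lt_reg_r with (/ rmax). apply Rinv_0_lt_compat; lra.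
    replace (rmax * Rabs (y - x) * / rmax) with (Rabs (y - x)) by (field; lra). exact Hy. }
  assert (Ea : cl a = a). { unfold cl. rewrite Rmin_left by lra. rewrite Rmax_right by lra. auto. }
  assert (Eb : cl b = b). { unfold cl. rewrite Rmin_left by lra. rewrite Rmax_right by lra. auto. }
  destruct (IVT_cor h a b Hc Hab) as [z [Hz Hhz]].
  { unfold h. rewrite Ea, Eb. assert (Fcum rho a - v <= 0) by lra. assert (0 <= Fcum rho b - v) by lra. nra. }
  exists z. split; auto. unfold h in Hhz.
  assert (Ez : cl z = z). { unfold cl. rewrite Rmin_left by lra. rewrite Rmax_right by lra. auto. }
  rewrite Ez in Hhz. lra.
Qed.

Lemma amedian_spec rho rmin rmax al a b : Good rho rmin rmax -> 0 <= a -> a <= b -> b <= 1 -> 0 <= al ->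
  a <= amedian rho al a b <= b /\
  Fcum rho (amedian rho al a b) = (Fcum rho a + al * Fcum rho b) / (1 + al).
Proof.
  intros G Ha Hab Hb Hal.
  pose proof (F_le rho rmin rmax a b G Ha Hab Hb) as Hle.
  set (v := (Fcum rho a + al * Fcum rho b) / (1 + al)).
  assert (Hv : Fcum rho a <= v <= Fcum rho b).
  { unfold v. split; apply (Rmult_le_reg_r (1 + al)); try lra; unfold Rdiv; rewrite Rmult_assoc, Rinv_l, Rmult_1_r by lra; nra. }
  assert (Hex : exists c, a <= c <= b /\ d_rho rho a c = al * d_rho rho c b).
  { destruct (F_ivt rho rmin rmax a b v G Ha Hab Hb Hv) as [c [Hc Hfc]].
    exists c. split; auto.
    rewrite (d_rho_F rho rmin rmax a c G), (d_rho_F rho rmin rmax c b G) by lra.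
    rewrite Rabs_left1 by lra. rewrite (Rabs_left1 (Fcum rho c - Fcum rho b)) by lra.
    rewrite Hfc. unfold v. field. lra. }
  pose proof (epsilon_spec (inhabits 0) _ Hex) as [Hc Hd].
  fold (amedian rho al a b) in Hc, Hd.
  set (c := amedian rho al a b) in *.
  split; auto.
  rewrite (d_rho_F rho rmin rmax a c G), (d_rho_F rho rmin rmax c b G) in Hd by lra.
  pose proof (F_le rho rmin rmax a c G ltac:(lra) ltac:(lra) ltac:(lra)).
  pose proof (F_le rho rmin rmax c b G ltac:(lra) ltac:(lra) ltac:(lra)).
  rewrite Rabs_left1 in Hd by lra. rewrite (Rabs_left1 (Fcum rho c - Fcum rho b)) in Hd by lra.
  assert (E : Fcum rho c * (1 + al) = Fcum rho a + al * Fcum rho b) by nra.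
  unfold v. rewrite <- E. field. lra.
Qed.

Lemma min_le n f i : (1 <= i <= n)%nat -> min_1_to n f <= f i.
Proof.
  induction n as [|n IH]; intros Hi; [lia|].
  destruct n as [|n].
  - assert (i = 1%nat) by lia. subst. simpl. lra.
  - change (min_1_to (S (S n)) f) with (Rmin (min_1_to (S n) f) (f (S (S n)))).
    destruct (Nat.eq_dec i (S (S n))) as [->|Hne].
    + apply Rmin_r.
    + eapply Rle_trans. apply Rmin_l. apply IH. lia.
Qed.

Lemma min_ge n f c : (1 <= n)%nat -> (forall i, (1 <= i <= n)%nat -> c <= f i) -> c <= min_1_to n f.
Proof.
  induction n as [|n IH]; intros Hn H; [lia|].
  destruct n as [|n].
  - simpl. apply H; lia.
  - change (min_1_to (S (S n)) f) with (Rmin (min_1_to (S n) f) (f (S (S n)))).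
    apply Rmin_glb. apply IH. lia. intros; apply H; lia. apply H; lia.
Qed.

Lemma chain (g : nat -> R) n : (forall i, (1 <= i < n)%nat -> g i <= g (S i)) ->
  forall i j, (1 <= i <= j)%nat -> (j <= n)%nat -> g i <= g j.
Proof.
  intros H i j Hij Hjn. induction j as [|j IH]; [lia|].
  destruct (Nat.eq_dec i (S j)) as [->|Hne]; [lra|].
  eapply Rle_trans. apply IH; lia. apply H; lia.
Qed.

Lemma yorder n (y y' : nat -> R) P : (2 <= n)%nat ->
  (forall i, (1 <= i <= n)%nat -> 0 <= y i <= P) ->
  (forall i, (1 <= i < n)%nat -> y i <= y (S i)) ->
  y' 1%nat = y 2%nat / 3 ->
  (forall i, (2 <= i <= n - 1)%nat -> y' i = (y (i - 1)%nat + y (i + 1)%nat) / 2) ->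
  y' n = (y (n - 1)%nat + 2 * P) / 3 ->
  forall i, (1 <= i < n)%nat -> y' i <= y' (S i).
Proof.
  intros Hn Hr Hm H1 Hmid Hl i Hi.
  assert (Ch := chain y n Hm).
  destruct (Nat.eq_dec i 1) as [->|Hi1].
  - destruct (Nat.eq_dec n 2) as [->|Hn2].
    + rewrite H1, Hl. simpl. pose proof (Hr 1%nat ltac:(lia)). pose proof (Hr 2%nat ltac:(lia)). lra.
    + rewrite H1, (Hmid 2%nat ltac:(lia)). simpl.
      pose proof (Hr 1%nat ltac:(lia)). pose proof (Hr 2%nat ltac:(lia)).
      pose proof (Ch 2%nat 3%nat ltac:(lia) ltac:(lia)). lra.
  - destruct (Nat.eq_dec (S i) n) as [Ei|Ni].
    + rewrite <- Ei in Hl. rewrite Hl, (Hmid i ltac:(lia)).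
      replace (S i - 1)%nat with i in * by lia.
      pose proof (Ch (i - 1)%nat i ltac:(lia) ltac:(lia)).
      replace (i + 1)%nat with (S i) by lia.
      pose proof (Hr i ltac:(lia)). pose proof (Hr (S i) ltac:(lia)). lra.
    + rewrite (Hmid i ltac:(lia)), (Hmid (S i) ltac:(lia)).
      replace (S i - 1)%nat with i by lia.
      pose proof (Ch (i - 1)%nat i ltac:(lia) ltac:(lia)).
      pose proof (Ch (i + 1)%nat (S i + 1)%nat ltac:(lia) ltac:(lia)). lra.
Qed.

Lemma Rdiv_le_0_compat a b : 0 <= a -> 0 < b -> 0 <= a / b.
Proof. intros. unfold Rdiv. apply Rmult_le_pos; auto. left; apply Rinv_0_lt_compat; auto. Qed.

Lemma Rabs_divp a c : 0 < c -> Rabs (a / c) = Rabs a / c.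
Proof. intros. unfold Rdiv. rewrite Rabs_mult, Rabs_inv, (Rabs_right c); auto; lra. Qed.

Lemma helper3 K L l e w2 w1 d : 0 <= K -> 0 <= L -> 0 < d -> e <= K * w2 * L ->
  w2 / d <= l * w1 -> e / d <= K * w1 * (l * L).
Proof.
  intros HK HL Hd He Hw.
  apply Rle_trans with (K * L * (w2 / d)).
  { unfold Rdiv. replace (K * L * (w2 * / d)) with ((K * w2 * L) * / d) by ring.
    apply Rmult_le_compat_r. left; apply Rinv_0_lt_compat; auto. auto. }
  replace (K * w1 * (l * L)) with (K * L * (l * w1)) by ring.
  apply Rmult_le_compat_l. apply Rmult_le_pos; auto. auto.
Qed.

Definition Wr (rn r : R) := 4 * rn ^ 2 - (2 * r - rn - 1) ^ 2.
Definition ybar (rn P r : R) := (2 * r - 1) * P / (2 * rn).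
Definition lam (rn : R) := 1 - 1 / rn ^ 2.

Lemma Wr_le rn r : Wr rn r <= 4 * rn ^ 2.
Proof. unfold Wr. pose proof (pow2_ge_0 (2 * r - rn - 1)). lra. Qed.

Lemma Wr_ge rn r : 1 <= r <= rn -> 3 * rn ^ 2 <= Wr rn r.
Proof. intros H. unfold Wr. nra. Qed.

Lemma lam_bounds rn : 2 <= rn -> 3/4 <= lam rn <= 1.
Proof.
  intros H. unfold lam. assert (4 <= rn ^ 2) by nra.
  assert (0 < 1 / rn ^ 2 <= 1/4). { split. apply Rdiv_lt_0_compat; lra.
    apply Rmult_le_reg_r with (rn ^ 2). lra. field_simplify; lra. } lra.
Qed.

Lemma boundary_ineq rn r : 2 <= rn -> Wr rn r / 3 <= lam rn * Wr rn 1.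
Proof.
  intros H. pose proof (Wr_le rn r). pose proof (Wr_ge rn 1 ltac:(lra)). pose proof (lam_bounds rn H).
  assert (0 < rn ^ 2) by nra. nra.
Qed.

Lemma Wr_sym rn : Wr rn rn = Wr rn 1.
Proof. unfold Wr. ring. Qed.

Lemma mid_ineq rn r : 2 <= rn -> (Wr rn (r - 1) + Wr rn (r + 1)) / 2 <= lam rn * Wr rn r.
Proof.
  intros H. pose proof (Wr_le rn r).
  assert (E : (Wr rn (r - 1) + Wr rn (r + 1)) / 2 = Wr rn r - 4) by (unfold Wr; field).
  rewrite E. unfold lam. assert (0 < rn ^ 2) by nra.
  assert (Wr rn r / rn ^ 2 <= 4). { apply Rmult_le_reg_r with (rn ^ 2). lra. field_simplify; lra. }
  replace ((1 - 1 / rn ^ 2) * Wr rn r) with (Wr rn r - Wr rn r / rn ^ 2) by (field; lra). lra.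
Qed.

Lemma err_bound n P (y : nat -> nat -> R) : (2 <= n)%nat -> 0 <= P ->
  (forall t i, (1 <= i <= n)%nat -> 0 <= y t i <= P) ->
  (forall t, y (S t) 1%nat = y t 2%nat / 3 /\
     (forall i, (2 <= i <= n - 1)%nat -> y (S t) i = (y t (i - 1)%nat + y t (i + 1)%nat) / 2) /\
     y (S t) n = (y t (n - 1)%nat + 2 * P) / 3) ->
  forall t i, (1 <= i <= n)%nat ->
    Rabs (y t i - ybar (INR n) P (INR i)) <= P / (3 * INR n ^ 2) * Wr (INR n) (INR i) * lam (INR n) ^ t.
Proof.
  intros Hn HP Hr Hrec.
  set (rn := INR n).
  assert (Hrn : 2 <= rn) by (unfold rn; replace 2 with (INR 2) by (simpl; lra); apply le_INR; lia).
  assert (Hrn2 : 0 < rn ^ 2) by nra.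
  assert (HK : 0 <= P / (3 * rn ^ 2)) by (apply Rdiv_le_0_compat; lra).
  pose proof (lam_bounds rn Hrn) as Hlam.
  induction t as [|t IH]; intros i Hi.
  - simpl. rewrite Rmult_1_r.
    assert (Hri : 1 <= INR i <= rn).
    { unfold rn; split; [replace 1 with (INR 1) by (simpl; lra)|]; apply le_INR; lia. }
    pose proof (Wr_ge rn (INR i) Hri). pose proof (Hr 0%nat i Hi).
    assert (Hyb : 0 <= ybar rn P (INR i) <= P).
    { unfold ybar. split. apply Rdiv_le_0_compat; nra.
      apply Rmult_le_reg_r with (2 * rn). lra. field_simplify; nra. }
    apply Rle_trans with P. apply Rabs_le; lra.
    apply Rle_trans with (P / (3 * rn ^ 2) * (3 * rn ^ 2)).
    right. field. lra. apply Rmult_le_compat_l; auto.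
  - assert (Hlt : 0 <= lam rn ^ t) by (apply pow_le; lra).
    rewrite <- tech_pow_Rmult.
    destruct (Hrec t) as [E1 [Emid En]].
    destruct (Nat.eq_dec i 1) as [->|Hi1].
    + rewrite E1. pose proof (IH 2%nat ltac:(lia)) as B.
      replace (y t 2%nat / 3 - ybar rn P (INR 1)) with ((y t 2%nat - ybar rn P (INR 2)) / 3)
        by (unfold ybar; simpl; field; lra).
      rewrite Rabs_divp by lra.
      pose proof (boundary_ineq rn (INR 2) Hrn).
      replace (INR 1) with 1 by (simpl; lra).
      apply (helper3 (P / (3 * rn ^ 2)) (lam rn ^ t) (lam rn)) with (Wr rn (INR 2)); auto; lra.
    + destruct (Nat.eq_dec i n) as [->|Hin].
      * rewrite En. pose proof (IH (n - 1)%nat ltac:(lia)) as B.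
        assert (Hn1 : INR (n - 1) = rn - 1) by (unfold rn; rewrite minus_INR by lia; simpl; ring).
        rewrite Hn1 in B.
        fold rn.
        replace ((y t (n - 1)%nat + 2 * P) / 3 - ybar rn P rn) with ((y t (n - 1)%nat - ybar rn P (rn - 1)) / 3)
          by (unfold ybar; field; lra).
        rewrite Rabs_divp by lra.
        pose proof (boundary_ineq rn (rn - 1) Hrn). rewrite Wr_sym.
        apply (helper3 (P / (3 * rn ^ 2)) (lam rn ^ t) (lam rn)) with (Wr rn (rn - 1)); auto; lra.
      * rewrite (Emid i ltac:(lia)).
        pose proof (IH (i - 1)%nat ltac:(lia)) as B1.
        pose proof (IH (i + 1)%nat ltac:(lia)) as B2.
        assert (Hi1' : INR (i - 1) = INR i - 1) by (rewrite minus_INR by lia; simpl; ring).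
        assert (Hi2' : INR (i + 1) = INR i + 1) by (rewrite plus_INR; simpl; ring).
        rewrite Hi1' in B1. rewrite Hi2' in B2.
        replace ((y t (i - 1)%nat + y t (i + 1)%nat) / 2 - ybar rn P (INR i)) with
          (((y t (i - 1)%nat - ybar rn P (INR i - 1)) + (y t (i + 1)%nat - ybar rn P (INR i + 1))) / 2)
          by (unfold ybar; field; lra).
        rewrite Rabs_divp by lra.
        pose proof (Rabs_triang (y t (i - 1)%nat - ybar rn P (INR i - 1)) (y t (i + 1)%nat - ybar rn P (INR i + 1))).
        pose proof (mid_ineq rn (INR i) Hrn).
        apply Rle_trans with ((Rabs (y t (i - 1)%nat - ybar rn P (INR i - 1)) + Rabs (y t (i + 1)%nat - ybar rn P (INR i + 1))) / 2).
        { unfold Rdiv. apply Rmult_le_compat_r; lra. }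
        apply (helper3 (P / (3 * rn ^ 2)) (lam rn ^ t) (lam rn)) with (Wr rn (INR i - 1) + Wr rn (INR i + 1)); [auto|auto|lra| |auto].
        rewrite Rmult_plus_distr_l, Rmult_plus_distr_r. lra.
Qed.

Lemma pigeon : forall n (f : nat -> nat), (forall j, (j <= n)%nat -> (1 <= f j <= n)%nat) ->
  exists j k, (j <= n)%nat /\ (k <= n)%nat /\ j <> k /\ f j = f k.
Proof.
  induction n as [|n IH]; intros f Hf.
  - specialize (Hf 0%nat ltac:(lia)). lia.
  - destruct (classic (exists j, (j <= n)%nat /\ f j = f (S n))) as [[j [Hj Ej]]|Hno].
    + exists j, (S n). repeat split; auto; lia.
    + set (g := fun j => if Nat.eq_dec (f j) (S n) then f (S n) else f j).
      assert (Hg : forall j, (j <= n)%nat -> (1 <= g j <= n)%nat).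
      { intros j Hj. unfold g. destruct (Nat.eq_dec (f j) (S n)) as [E|E].
        - pose proof (Hf (S n) ltac:(lia)).
          destruct (Nat.eq_dec (f (S n)) (S n)); [|lia].
          exfalso. apply Hno. exists j. split; auto. lia.
        - pose proof (Hf j ltac:(lia)). lia. }
      destruct (IH g Hg) as [j [k [Hj [Hk [Hjk Eg]]]]].
      exists j, k. repeat split; auto; try lia.
      unfold g in Eg.
      destruct (Nat.eq_dec (f j) (S n)) as [E1|E1]; destruct (Nat.eq_dec (f k) (S n)) as [E2|E2]; try congruence.
      * exfalso. apply Hno. exists k. split; [exact Hk | symmetry; exact Eg].
      * exfalso. apply Hno. exists j. split; [exact Hj | exact Eg].
Qed.

Lemma exists_i : forall n s, (1 <= n)%nat -> 0 <= s <= INR n ->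
  exists i, (1 <= i <= n)%nat /\ INR i - 1 <= s <= INR i.
Proof.
  induction n as [|n IH]; intros s Hn Hs; [lia|].
  destruct (Nat.eq_dec n 0) as [->|Hn0].
  - exists 1%nat. split. lia. simpl in *. lra.
  - destruct (Rle_dec s (INR n)).
    + destruct (IH s ltac:(lia) ltac:(lra)) as [i [Hi Hsi]]. exists i. split; auto; lia.
    + exists (S n). split. lia. rewrite S_INR in *. lra.
Qed.

Definition Sset rho n x := fun v => exists y, 0 <= y <= 1 /\ v = min_1_to n (fun i => d_rho rho y (x i)).

Lemma Phi_lub rho rmin rmax n x : Good rho rmin rmax -> (1 <= n)%nat ->
  (forall i, (1 <= i <= n)%nat -> 0 <= x i <= 1) ->
  is_lub (Sset rho n x) (Phi rho n x).
Proof.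
  intros G Hn Hx.
  assert (Hex : exists l, is_lub (Sset rho n x) l).
  { destruct (completeness (Sset rho n x)) as [l Hl].
    - exists (rmax). intros v [y [Hy ->]].
      eapply Rle_trans. apply (min_le n _ 1%nat). lia.
      rewrite (d_rho_F rho rmin rmax) by (auto; apply Hx; lia).
      pose proof (F_dist rho rmin rmax y (x 1%nat) G Hy (Hx 1%nat ltac:(lia))).
      pose proof (Hx 1%nat ltac:(lia)).
      assert (Rabs (y - x 1%nat) <= 1) by (apply Rabs_le; lra).
      assert (0 <= rmax) by (destruct G as [_ [Hm Hz]]; pose proof (Hz 0 ltac:(lra)); lra).
      nra.
    - exists (min_1_to n (fun i => d_rho rho 0 (x i))). exists 0. split; auto; lra.
    - exists l; auto. }
  exact (epsilon_spec (inhabits 0) _ Hex).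
Qed.

Lemma P_pos rho rmin rmax : Good rho rmin rmax -> rmin <= Fcum rho 1 <= rmax.
Proof.
  intros G. pose proof (F_lower rho rmin rmax 0 1 G ltac:(lra) ltac:(lra) ltac:(lra)).
  rewrite (F0 rho rmin rmax G) in H. lra.
Qed.

Lemma F_range rho rmin rmax y : Good rho rmin rmax -> 0 <= y <= 1 -> 0 <= Fcum rho y <= Fcum rho 1.
Proof.
  intros G Hy. pose proof (F0 rho rmin rmax G).
  pose proof (F_le rho rmin rmax 0 y G ltac:(lra) ltac:(lra) ltac:(lra)).
  pose proof (F_le rho rmin rmax y 1 G ltac:(lra) ltac:(lra) ltac:(lra)). lra.
Qed.

Lemma Phi_xbar_le rho rmin rmax n xb : Good rho rmin rmax -> (1 <= n)%nat ->
  (forall i, (1 <= i <= n)%nat -> 0 <= xb i <= 1 /\ Fcum rho (xb i) = ybar (INR n) (Fcum rho 1) (INR i)) ->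
  Phi rho n xb <= Fcum rho 1 / (2 * INR n).
Proof.
  intros G Hn Hxb.
  assert (Hl := Phi_lub rho rmin rmax n xb G Hn ltac:(intros; apply Hxb; auto)).
  apply (proj2 Hl). intros v [y [Hy ->]].
  set (P := Fcum rho 1). set (rn := INR n).
  assert (HP : 0 < P) by (pose proof (P_pos rho rmin rmax G); destruct G as [_ [Hm _]]; unfold P; lra).
  assert (Hrn : 1 <= rn) by (unfold rn; replace 1 with (INR 1) by (simpl; lra); apply le_INR; lia).
  set (u := Fcum rho y).
  assert (Hu : 0 <= u <= P) by (apply (F_range rho rmin rmax); auto).
  destruct (exists_i n (u * rn / P) Hn) as [i [Hi Hs]].
  { change (INR n) with rn. split. apply Rdiv_le_0_compat; nra. apply Rmult_le_reg_r with P; auto.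
    replace (u * rn / P * P) with (u * rn) by (field; lra). nra. }
  eapply Rle_trans. apply (min_le n _ i Hi).
  destruct (Hxb i Hi) as [Hxi Exi].
  rewrite (d_rho_F rho rmin rmax) by auto. fold u. rewrite Exi. fold P. fold rn.
  unfold ybar. apply Rabs_le.
  assert (Hs1 : INR i - 1 <= u * rn / P) by lra. assert (Hs2 : u * rn / P <= INR i) by lra.
  assert (A1 : (INR i - 1) * P <= u * rn).
  { apply Rmult_le_compat_r with (r := P) in Hs1; [|lra]. replace (u * rn / P * P) with (u * rn) in Hs1 by (field; lra). lra. }
  assert (A2 : u * rn <= INR i * P).
  { apply Rmult_le_compat_r with (r := P) in Hs2; [|lra]. replace (u * rn / P * P) with (u * rn) in Hs2 by (field; lra). lra. }
  replace (u - (2 * INR i - 1) * P / (2 * rn)) with ((2 * (u * rn) - (2 * INR i - 1) * P) / (2 * rn)) by (field; lra).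
  assert (Hd : 0 < / (2 * rn)) by (apply Rinv_0_lt_compat; lra).
  unfold Rdiv. split.
  - replace (- (P * / (2 * rn))) with ((- P) * / (2 * rn)) by ring.
    apply Rmult_le_compat_r; lra.
  - apply Rmult_le_compat_r; lra.
Qed.

Lemma Phi_ge rho rmin rmax n x : Good rho rmin rmax -> (1 <= n)%nat ->
  (forall i, (1 <= i <= n)%nat -> 0 <= x i <= 1) ->
  Fcum rho 1 / (2 * INR n) <= Phi rho n x.
Proof.
  intros G Hn Hx.
  assert (Hl := Phi_lub rho rmin rmax n x G Hn Hx).
  set (P := Fcum rho 1). set (rn := INR n).
  assert (HP : 0 < P) by (pose proof (P_pos rho rmin rmax G); destruct G as [_ [Hm _]]; unfold P; lra).
  assert (Hrn : 1 <= rn) by (unfold rn; replace 1 with (INR 1) by (simpl; lra); apply le_INR; lia).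
  set (h := P / (2 * rn)).
  assert (Hh : 0 < h) by (unfold h; apply Rdiv_lt_0_compat; lra).
  set (uj := fun j : nat => INR j * P / rn).
  assert (Hj : exists j, (j <= n)%nat /\ forall i, (1 <= i <= n)%nat -> h <= Rabs (uj j - Fcum rho (x i))).
  { apply NNPP. intros Hno.
    assert (Hall : forall j, (j <= n)%nat -> exists i, (1 <= i <= n)%nat /\ Rabs (uj j - Fcum rho (x i)) < h).
    { intros j Hj. apply NNPP. intros Hn2. apply Hno. exists j. split; auto.
      intros i Hi. destruct (Rle_lt_dec h (Rabs (uj j - Fcum rho (x i)))); auto.
      exfalso. apply Hn2. exists i. split; auto. }
    set (f := fun j => epsilon (inhabits 0%nat) (fun i => (1 <= i <= n)%nat /\ Rabs (uj j - Fcum rho (x i)) < h)).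
    assert (Hf : forall j, (j <= n)%nat -> (1 <= f j <= n)%nat /\ Rabs (uj j - Fcum rho (x (f j))) < h).
    { intros j Hj. exact (epsilon_spec (inhabits 0%nat) _ (Hall j Hj)). }
    destruct (pigeon n f (fun j Hj => proj1 (Hf j Hj))) as [j [k [Hjn [Hkn [Hjk Efk]]]]].
    destruct (Hf j Hjn) as [_ A1]. destruct (Hf k Hkn) as [_ A2]. rewrite <- Efk in A2.
    assert (Hd : Rabs (uj j - uj k) < 2 * h).
    { replace (uj j - uj k) with ((uj j - Fcum rho (x (f j))) - (uj k - Fcum rho (x (f j)))) by ring.
      pose proof (Rabs_triang (uj j - Fcum rho (x (f j))) (- (uj k - Fcum rho (x (f j))))).
      rewrite Rabs_Ropp in H. unfold Rminus at 1. lra. }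
    assert (Hjk' : 1 <= Rabs (INR j - INR k)).
    { destruct (Nat.lt_ge_cases j k) as [L|L].
      - apply lt_INR in L. assert (INR (S j) <= INR k) by (apply le_INR; apply INR_lt in L; lia).
        rewrite S_INR in H. rewrite Rabs_left1; lra.
      - assert (k < j)%nat by lia. assert (INR (S k) <= INR j) by (apply le_INR; lia).
        rewrite S_INR in H0. rewrite Rabs_right; lra. }
    replace (uj j - uj k) with ((INR j - INR k) * (P / rn)) in Hd by (unfold uj; field; lra).
    rewrite Rabs_mult, (Rabs_right (P / rn)) in Hd by (left; apply Rdiv_lt_0_compat; lra).
    assert (E2h : 2 * h = P / rn) by (unfold h; field; lra).
    assert (0 < P / rn) by (apply Rdiv_lt_0_compat; lra).
    nra. }
  destruct Hj as [j [Hjn Hji]].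
  assert (Hu : 0 <= uj j <= P).
  { unfold uj. assert (INR j <= rn) by (apply le_INR; auto). pose proof (pos_INR j). split.
    apply Rdiv_le_0_compat; nra. apply Rmult_le_reg_r with rn; [lra|].
    replace (INR j * P / rn * rn) with (INR j * P) by (field; lra). nra. }
  destruct (F_ivt rho rmin rmax 0 1 (uj j) G) as [y [Hy Ey]]; try lra.
  { rewrite (F0 rho rmin rmax G). fold P. auto. }
  apply Rle_trans with (min_1_to n (fun i => d_rho rho y (x i))).
  - apply min_ge; auto. intros i Hi. rewrite (d_rho_F rho rmin rmax) by auto. rewrite Ey. apply Hji; auto.
  - apply (proj1 Hl). exists y. split; auto.
Qed.

Lemma Phistar_eq rho rmin rmax n xb : Good rho rmin rmax -> (1 <= n)%nat ->
  (forall i, (1 <= i <= n)%nat -> 0 <= xb i <= 1 /\ Fcum rho (xb i) = ybar (INR n) (Fcum rho 1) (INR i)) ->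
  Phi rho n xb = Phistar rho n.
Proof.
  intros G Hn Hxb.
  pose proof (Phi_xbar_le rho rmin rmax n xb G Hn Hxb).
  assert (Hmin : forall x, (forall i, (1 <= i <= n)%nat -> 0 <= x i <= 1) -> Phi rho n xb <= Phi rho n x).
  { intros x Hx. pose proof (Phi_ge rho rmin rmax n x G Hn Hx). lra. }
  assert (Hex : exists v, (forall x : nat -> R, (forall i, (1 <= i <= n)%nat -> 0 <= x i <= 1) -> v <= Phi rho n x) /\
       (forall w, (forall x : nat -> R, (forall i, (1 <= i <= n)%nat -> 0 <= x i <= 1) -> w <= Phi rho n x) -> w <= v)).
  { exists (Phi rho n xb). split; auto. intros w Hw. apply Hw. intros; apply Hxb; auto. }
  destruct (epsilon_spec (inhabits 0) _ Hex) as [A B].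
  fold (Phistar rho n) in A, B.
  apply Rle_antisym.
  - apply B. auto.
  - apply A. intros; apply Hxb; auto.
Qed.

Lemma exp_le a b : a <= b -> exp a <= exp b.
Proof. intros [H|H]. left; apply exp_increasing; auto. subst; lra. Qed.

Lemma exp_pow a t : exp a ^ t = exp (a * INR t).
Proof.
  induction t as [|t IH]. simpl. rewrite Rmult_0_r, exp_0. auto.
  rewrite <- tech_pow_Rmult, IH, S_INR, <- exp_plus. f_equal. ring.
Qed.

Lemma final_rate rn R eps t : 2 <= rn -> 1 <= R -> 0 < eps <= 1 ->
  INR t >= 1 * rn ^ 2 * ln (rn / eps * R) ->
  4 / 3 * R * lam rn ^ t <= eps.
Proof.
  intros Hrn HR He Ht.
  assert (Hrn2 : 0 < rn ^ 2) by nra.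
  pose proof (lam_bounds rn Hrn) as Hl.
  set (Q := rn / eps * R).
  assert (HQ : 0 < Q) by (unfold Q; apply Rmult_lt_0_compat; [apply Rdiv_lt_0_compat|]; lra).
  assert (A1 : lam rn ^ t <= exp (- (1 / rn ^ 2)) ^ t).
  { apply pow_incr. split. lra. unfold lam. pose proof (exp_ineq1_le (- (1 / rn ^ 2))). lra. }
  rewrite exp_pow in A1.
  assert (A2 : exp (- (1 / rn ^ 2) * INR t) <= exp (- ln Q)).
  { apply exp_le. assert (INR t / rn ^ 2 >= ln Q).
    { apply Rle_ge. apply Rmult_le_reg_r with (rn ^ 2); auto. replace (INR t / rn ^ 2 * rn ^ 2) with (INR t) by (field; lra). fold Q in Ht. lra. }
    replace (- (1 / rn ^ 2) * INR t) with (- (INR t / rn ^ 2)) by (field; lra). lra. }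
  rewrite exp_Ropp, exp_ln in A2 by auto.
  assert (A3 : lam rn ^ t <= / Q) by lra.
  apply Rle_trans with (4 / 3 * R * / Q).
  { apply Rmult_le_compat_l; auto. lra. }
  unfold Q. replace (4 / 3 * R * / (rn / eps * R)) with (4 / 3 * eps / rn) by (field; lra).
  apply Rmult_le_reg_r with rn. lra. replace (4 / 3 * eps / rn * rn) with (4 / 3 * eps) by (field; lra). nra.
Qed.

Definition Inv n (x : nat -> nat -> R) t :=
  (forall i, (1 <= i <= n)%nat -> 0 <= x t i <= 1) /\ (forall i, (1 <= i < n)%nat -> x t i <= x t (S i)).

Lemma step rho rmin rmax n x t : Good rho rmin rmax -> (2 <= n)%nat -> coverage_law rho n x -> Inv n x t ->
  (Fcum rho (x (S t) 1%nat) = Fcum rho (x t 2%nat) / 3 /\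
   (forall i, (2 <= i <= n - 1)%nat -> Fcum rho (x (S t) i) = (Fcum rho (x t (i - 1)%nat) + Fcum rho (x t (i + 1)%nat)) / 2) /\
   Fcum rho (x (S t) n) = (Fcum rho (x t (n - 1)%nat) + 2 * Fcum rho 1) / 3) /\ Inv n x (S t).
Proof.
  intros G Hn Hlaw [Hr Hm].
  destruct (Hlaw t) as [L1 [Lmid Ln]].
  assert (Ch := chain (x t) n Hm).
  pose proof (F0 rho rmin rmax G) as F0e.
  assert (S1 := amedian_spec rho rmin rmax (1/2) 0 (x t 2%nat) G ltac:(lra) ltac:(apply Hr; lia) ltac:(apply Hr; lia) ltac:(lra)).
  rewrite <- L1 in S1.
  assert (Sn := amedian_spec rho rmin rmax 2 (x t (n - 1)%nat) 1 G ltac:(apply Hr; lia) ltac:(apply Hr; lia) ltac:(lra) ltac:(lra)).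
  rewrite <- Ln in Sn.
  assert (Smid : forall i, (2 <= i <= n - 1)%nat -> x t (i - 1)%nat <= x (S t) i <= x t (i + 1)%nat /\
     Fcum rho (x (S t) i) = (Fcum rho (x t (i - 1)%nat) + Fcum rho (x t (i + 1)%nat)) / 2).
  { intros i Hi. rewrite (Lmid i Hi).
    destruct (amedian_spec rho rmin rmax 1 (x t (i - 1)%nat) (x t (i + 1)%nat) G) as [A B].
    apply Hr; lia. apply Ch; lia. apply Hr; lia. lra.
    split; auto. rewrite B. field. }
  assert (Rng : forall i, (1 <= i <= n)%nat -> 0 <= x (S t) i <= 1).
  { intros i Hi. destruct (Nat.eq_dec i 1) as [->|H1].
    - pose proof (Hr 2%nat ltac:(lia)). lra.
    - destruct (Nat.eq_dec i n) as [->|H2].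
      + pose proof (Hr (n - 1)%nat ltac:(lia)). lra.
      + destruct (Smid i ltac:(lia)) as [A _]. pose proof (Hr (i - 1)%nat ltac:(lia)). pose proof (Hr (i + 1)%nat ltac:(lia)). lra. }
  assert (E1 : Fcum rho (x (S t) 1%nat) = Fcum rho (x t 2%nat) / 3).
  { rewrite (proj2 S1), F0e. field. }
  assert (En : Fcum rho (x (S t) n) = (Fcum rho (x t (n - 1)%nat) + 2 * Fcum rho 1) / 3).
  { rewrite (proj2 Sn). field. }
  assert (Emid : forall i, (2 <= i <= n - 1)%nat -> Fcum rho (x (S t) i) = (Fcum rho (x t (i - 1)%nat) + Fcum rho (x t (i + 1)%nat)) / 2).
  { intros i Hi. apply Smid; auto. }
  split. { split; auto. }
  split; auto.
  intros i Hi.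
  apply (F_mono rho rmin rmax); [auto | apply Rng; lia | apply Rng; lia |].
  apply (yorder n (fun j => Fcum rho (x t j)) (fun j => Fcum rho (x (S t) j)) (Fcum rho 1) Hn); auto.
  - intros j Hj. apply (F_range rho rmin rmax); auto.
  - intros j Hj. apply (F_le rho rmin rmax (x t j) (x t (S j)) G); [apply Hr; lia | apply Hm; auto |].
    pose proof (Hr (S j) ltac:(lia)); lra.
Qed.

Theorem theorem1 :
  exists C : R, 0 < C /\
  forall (n : nat) (rho : R -> R) (rho_min rho_max : R) (x : nat -> nat -> R),
    (2 <= n)%nat ->
    0 < rho_min -> 0 < rho_max ->
    (forall z, 0 <= z <= 1 -> rho_min <= rho z <= rho_max) ->
    piecewise_continuous01 rho ->
    0 <= x 0%nat 1%nat ->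
    (forall i, (1 <= i < n)%nat -> x 0%nat i <= x 0%nat (S i)) ->
    x 0%nat n <= 1 ->
    coverage_law rho n x ->
    exists xbar : nat -> R,
      (forall i, (1 <= i <= n)%nat -> Un_cv (fun t => x t i) (xbar i)) /\
      Phi rho n xbar = Phistar rho n /\
      (forall eps : R, 0 < eps <= 1 ->
         forall t : nat,
           INR t >= C * (INR n) ^ 2 * ln (INR n / eps * (rho_max / rho_min)) ->
           forall i, (1 <= i <= n)%nat -> Rabs (x t i - xbar i) <= eps).
Proof.
  exists 1. split; [lra|].
  intros n rho rmin rmax x Hn Hmin Hmax Hb Hpc H0 Hmono Hn1 Hlaw.
  assert (G : Good rho rmin rmax) by (split; [apply rho_integrable01; auto | split; auto]).
  set (P := Fcum rho 1).
  set (rn := INR n).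
  assert (Hrn : 2 <= rn) by (unfold rn; replace 2 with (INR 2) by (simpl; lra); apply le_INR; lia).
  pose proof (P_pos rho rmin rmax G) as HP. fold P in HP.
  assert (Inv0 : Inv n x 0).
  { split; auto. intros i Hi. pose proof (chain (x 0%nat) n Hmono).
    split. apply Rle_trans with (x 0%nat 1%nat); auto; apply H; lia.
    apply Rle_trans with (x 0%nat n); auto; apply H; lia. }
  assert (InvAll : forall t, Inv n x t).
  { induction t; auto. apply (step rho rmin rmax n x t G Hn Hlaw IHt). }
  set (yb := fun i : nat => ybar rn P (INR i)).
  assert (Hyb : forall i, (1 <= i <= n)%nat -> 0 <= yb i <= P).
  { intros i Hi. assert (Hri : 1 <= INR i <= rn).
    { unfold rn; split; [replace 1 with (INR 1) by (simpl; lra)|]; apply le_INR; lia. }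
    unfold yb, ybar. split. apply Rdiv_le_0_compat; nra.
    apply Rmult_le_reg_r with (2 * rn). lra. replace ((2 * INR i - 1) * P / (2 * rn) * (2 * rn)) with ((2 * INR i - 1) * P) by (field; lra). nra. }
  set (xbar := fun i => epsilon (inhabits 0) (fun c => 0 <= c <= 1 /\ Fcum rho c = yb i)).
  assert (Hxbar : forall i, (1 <= i <= n)%nat -> 0 <= xbar i <= 1 /\ Fcum rho (xbar i) = ybar rn P (INR i)).
  { intros i Hi. apply (epsilon_spec (inhabits 0) (fun c => 0 <= c <= 1 /\ Fcum rho c = yb i)).
    destruct (F_ivt rho rmin rmax 0 1 (yb i) G) as [c [Hc Ec]]; try lra.
    rewrite (F0 rho rmin rmax G). fold P. apply Hyb; auto.
    exists c. auto. }
  assert (EB := err_bound n P (fun t i => Fcum rho (x t i)) Hn ltac:(lra)).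
  assert (EB2 : forall t i, (1 <= i <= n)%nat ->
            Rabs (Fcum rho (x t i) - ybar rn P (INR i)) <= P / (3 * rn ^ 2) * Wr rn (INR i) * lam rn ^ t).
  { apply EB.
    - intros t i Hi. apply (F_range rho rmin rmax); auto. apply InvAll; auto.
    - intros t. exact (proj1 (step rho rmin rmax n x t G Hn Hlaw (InvAll t))). }
  assert (Main : forall t i, (1 <= i <= n)%nat -> Rabs (x t i - xbar i) <= 4 / 3 * (rmax / rmin) * lam rn ^ t).
  { intros t i Hi. specialize (EB2 t i Hi).
    destruct (Hxbar i Hi) as [Hxi Exi]. rewrite <- Exi in EB2.
    pose proof (F_dist rho rmin rmax (x t i) (xbar i) G (proj1 (InvAll t) i Hi) Hxi).
    pose proof (Wr_le rn (INR i)).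
    pose proof (lam_bounds rn Hrn).
    assert (0 <= lam rn ^ t) by (apply pow_le; lra).
    assert (Hrn2 : 0 < rn ^ 2) by nra.
    assert (K1 : P / (3 * rn ^ 2) * Wr rn (INR i) <= 4 / 3 * P).
    { apply Rle_trans with (P / (3 * rn ^ 2) * (4 * rn ^ 2)).
      apply Rmult_le_compat_l; auto. apply Rdiv_le_0_compat; lra. right; field; lra. }
    assert (K2 : rmin * Rabs (x t i - xbar i) <= 4 / 3 * P * lam rn ^ t).
    { apply Rle_trans with (P / (3 * rn ^ 2) * Wr rn (INR i) * lam rn ^ t). lra.
      apply Rmult_le_compat_r; auto. }
    apply Rmult_le_reg_l with rmin; auto.
    apply Rle_trans with (4 / 3 * P * lam rn ^ t); auto.
    replace (rmin * (4 / 3 * (rmax / rmin) * lam rn ^ t)) with (4 / 3 * rmax * lam rn ^ t) by (field; lra).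
    apply Rmult_le_compat_r; auto. lra. }
  assert (HR : 1 <= rmax / rmin).
  { pose proof (Hb 0 ltac:(lra)). apply Rmult_le_reg_r with rmin; auto.
    replace (rmax / rmin * rmin) with rmax by (field; lra). lra. }
  assert (Rate : forall eps, 0 < eps <= 1 -> forall t : nat,
           INR t >= 1 * rn ^ 2 * ln (rn / eps * (rmax / rmin)) ->
           forall i, (1 <= i <= n)%nat -> Rabs (x t i - xbar i) <= eps).
  { intros eps He t Ht i Hi. eapply Rle_trans. apply Main; auto.
    apply final_rate; auto. }
  exists xbar. split; [|split].
  - intros i Hi eps He.
    set (e := Rmin (eps / 2) 1).
    assert (He1 : 0 < e <= 1).
    { unfold e. split. apply Rmin_pos; lra. apply Rmin_r. }
    destruct (INR_unbounded (1 * rn ^ 2 * ln (rn / e * (rmax / rmin)))) as [N HN].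
    exists N. intros t Ht. unfold R_dist.
    assert (INR N <= INR t) by (apply le_INR; lia).
    apply Rle_lt_trans with e. apply (Rate e He1 t); auto. lra.
    unfold e. pose proof (Rmin_l (eps / 2) 1). lra.
  - apply (Phistar_eq rho rmin rmax n xbar G ltac:(lia)). auto.
  - exact Rate.
Qed.
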